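(* Let $q\ge2$ and $\mu,R>0$. There is no sequence of ID codes for $\Pi^q_{n_i}$, $i=1,2,\dots$, with $n_i\to\infty$, with $M_i\ge 2^{Rn_i^{q-1}}$ messages, and with type-I and type-II error probabilities satisfying $\lambda_{1,i}<n_i^{-\mu}$ and $\lambda_{2,i}<n_i^{-\mu}$ for all $i$.
   Context: Fix an integer $q\ge 2$ and let $\mathcal A_q=\{1,\dots,q\}$. For $n\ge 1$, $S_n$ is the symmetric group on $\{1,\dots,n\}$, and for $\mathbf x\in\mathcal A_q^n$, $\sigma\in S_n$, we write $\sigma\mathbf x=(x_{\sigma^{-1}(1)},\dots,x_{\sigma^{-1}(n)})$. The $n$-block $q$-ary uniform permutation channel $\Pi^q_n$ has input and output alphabet $\mathcal A_q^n$ and transition probabilities $\Pi^q_n(\mathbf y\mid\mathbf x)=\frac{1}{n!}\sum_{\sigma\in S_n}\mathbf 1\{\mathbf y=\sigma\mathbf x\}$; $\Pi^q$ denotes the family $(\Pi^q_n)_{n\ge1}$. An ID code (with deterministic decoders) with $M$ messages for $\Pi^q_n$ (an ''$(n,M,\lambda_1,\lambda_2)$ ID code'') is a family $\{(Q_i,\mathcal D_i)\}_{i=1}^M$ where each $Q_i$ is a probability distribution on $\mathcal A_q^n$ (the stochastic encoder of message $i$) and $\mathcal D_i\subseteq\mathcal A_q^n$ (the acceptance region of message $i$). Its error probabilities are $\lambda_{i\to j}=\sum_{\mathbf x}Q_i(\mathbf x)\sum_{\mathbf y\in\mathcal D_j}\Pi^q_n(\mathbf y\mid\mathbf x)$ for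 $i\ne j$ and $\lambda_{i\not\to i}=\sum_{\mathbf x}Q_i(\mathbf x)\sum_{\mathbf y\notin\mathcal D_i}\Pi^q_n(\mathbf y\mid\mathbf x)$; the type-I error probability is $\lambda_1=\max_i\lambda_{i\not\to i}$ and the type-II error probability is $\lambda_2=\max_{i\ne j}\lambda_{i\to j}$. *)

(* Defs.v *)
From HB Require Import structures.
From mathcomp Require Import all_boot all_order all_algebra all_fingroup.
From mathcomp Require Import all_classical all_reals all_analysis.
Set Implicit Arguments. Unset Strict Implicit. Unset Printing Implicit Defensive.
Import Order.TTheory GRing.Theory Num.Theory.
Local Open Scope ring_scope.

(* Alphabet A_q = {1,...,q} is represented by 'I_q = {0,...,q-1};
   words of length n are finite functions 'I_n -> 'I_q. *)
Definition word (q n : nat) := {ffun 'I_n -> 'I_q}.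

Definition permw (q n : nat) (s : 'S_n) (x : word q n) : word q n :=
  [ffun i => x ((s^-1)%g i)].

Definition perm_channel (R : realType) (q n : nat) (y x : word q n) : R :=
  (n`!%:R)^-1 * \sum_(s : 'S_n) (y == permw s x)%:R.

(* An ID code with deterministic decoders for Pi^q_n:
   M messages, stochastic encoders Q i (probability distributions on A_q^n),
   acceptance regions D i. *)
Record IDcode (R : realType) (q n : nat) := {
  idM : nat;
  idQ : 'I_idM -> {ffun word q n -> R};
  idD : 'I_idM -> {set word q n};
  idQ_ge0 : forall i x, 0 <= idQ i x;
  idQ_sum1 : forall i, \sum_x idQ i x = 1
}.

Section Errors.
Variables (R : realType) (q n : nat) (C : IDcode R q n).

Definition lam_to (i j : 'I_(idM C)) : R :=
  \sum_x @idQ _ _ _ C i x * \sum_(y in @idD _ _ _ C j) perm_channel R y x.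

Definition lam_not (i : 'I_(idM C)) : R :=
  \sum_x @idQ _ _ _ C i x * \sum_(y in ~: @idD _ _ _ C i) perm_channel R y x.

(* type-I and type-II error probabilities (max of nonnegative quantities;
   empty maxima are 0) *)
Definition lambda1 : R := \big[Num.max/0]_(i < idM C) lam_not i.
Definition lambda2 : R :=
  \big[Num.max/0]_(i < idM C) \big[Num.max/0]_(j < idM C | j != i) lam_to i j.
End Errors.

(* Main.v *)
Require Import Defs.
From HB Require Import structures.
From mathcomp Require Import all_boot all_order all_algebra all_fingroup.
From mathcomp Require Import all_classical all_reals all_analysis.
From mathcomp Require Import ring lra.
Import Order.TTheory GRing.Theory Num.Theory.
Local Open Scope ring_scope.

Section Chan.
Variables (RT : realType) (q n : nat).

Definition acc (D : {set word q n}) (x : word q n) : RT :=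
  \sum_(y in D) perm_channel RT y x.

Lemma W_ge0 (y x : word q n) : 0 <= perm_channel RT y x.
Proof.
rewrite /perm_channel mulr_ge0 ?invr_ge0 ?ler0n //.
by apply: sumr_ge0 => s _; rewrite ler0n.
Qed.

Lemma W_sum1 (x : word q n) : \sum_y perm_channel RT y x = 1.
Proof.
rewrite /perm_channel -mulr_sumr exchange_big /=.
rewrite (eq_bigr (fun _ => 1)); last first.
  move=> s _; rewrite (bigD1 (permw s x)) //= eqxx big1 ?addr0 //.
  by move=> y /negbTE ->.
rewrite sumr_const card_Sn mulVf // pnatr_eq0 -lt0n; exact: fact_gt0.
Qed.

Lemma acc_compl D x : acc D x + acc (~: D) x = 1.
Proof.
rewrite /acc -(W_sum1 x) (bigID (mem D) predT) /=.
by congr (_ + _); apply: eq_bigl => y; rewrite inE.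
Qed.

Lemma acc_ge0 D x : 0 <= acc D x.
Proof. by apply: sumr_ge0 => y _; apply: W_ge0. Qed.

Lemma permw_comp s t (x : word q n) : permw s (permw t x) = permw (t * s)%g x.
Proof. by apply/ffunP => i; rewrite !ffunE invMg permM. Qed.

Lemma W_perm t y (x : word q n) : perm_channel RT y (permw t x) = perm_channel RT y x.
Proof.
rewrite /perm_channel; congr (_ * _).
rewrite (reindex_inj (mulgI t^-1)%g) /=.
by apply: eq_bigr => s _; rewrite permw_comp mulgA mulgV mul1g.
Qed.

Lemma acc_perm D t x : acc D (permw t x) = acc D x.
Proof. by apply: eq_bigr => y _; rewrite W_perm. Qed.
End Chan.
Local Open Scope nat_scope.
Section Types.
Variables (q n : nat).

Definition wseq (x : word q.+1 n) := map x (enum 'I_n).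

Lemma size_wseq x : size (wseq x) = n.
Proof. by rewrite size_map size_enum_ord. Qed.

Definition tau (x : word q.+1 n) : {ffun 'I_q -> 'I_n.+1} :=
  [ffun k => inord (count_mem (widen_ord (leqnSn q) k) (wseq x))].

Lemma sum_count (s : seq 'I_q.+1) : \sum_(c < q.+1) count_mem c s = size s.
Proof.
elim: s => [|a s IH]; first by rewrite big1.
rewrite /= big_split /= IH.
suff -> : \sum_(i < q.+1) (a == i) = 1 by [].
rewrite (bigD1 a) //= eqxx big1 // => c /negbTE; by rewrite eq_sym => ->.
Qed.

Lemma tau_perm x y : tau x = tau y -> exists t : 'S_n, y = permw t x.
Proof.
move=> E.
have Hc : forall c, count_mem c (wseq x) = count_mem c (wseq y).
  have Hk : forall k : 'I_q, count_mem (widen_ord (leqnSn q) k) (wseq x)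
                          = count_mem (widen_ord (leqnSn q) k) (wseq y).
    move=> k; move/ffunP: E => /(_ k); rewrite !ffunE => /(congr1 val).
    rewrite /= !inordK // ltnS.
    - by rewrite -[X in (_ <= X)%N](size_wseq y) count_size.
    - by rewrite -[X in (_ <= X)%N](size_wseq x) count_size.
  move=> c; case: (unliftP ord_max c) => [k ->|->].
    have -> : lift ord_max k = widen_ord (leqnSn q) k by apply: val_inj; rewrite /= /bump leqNgt ltn_ord.
    exact: Hk.
  have := sum_count (wseq x); have := sum_count (wseq y).
  rewrite !big_ord_recr /= !size_wseq => Ey Ex.
  have : \sum_(i < q) count_mem (widen_ord (leqnSn q) i) (wseq x) =
         \sum_(i < q) count_mem (widen_ord (leqnSn q) i) (wseq y).
    by apply: eq_bigr => i _; apply: Hk.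
  move=> Es. rewrite Es in Ex. by apply/eqP; rewrite -(eqn_add2l (\sum_(i < q) count_mem (widen_ord (leqnSn q) i) (wseq y))) Ex Ey.
have Hp : perm_eq (wseq y) [tuple x i | i < n].
  apply/allP => z _; rewrite /=.
  by rewrite -/(wseq x) -Hc.
case/tuple_permP: Hp => p Hp.
exists p^-1%g; apply/ffunP => i; rewrite ffunE invgK.
have := congr1 (fun s => nth (x i) s i) Hp.
rewrite /= /wseq (nth_map i) ?size_enum_ord // nth_ord_enum.
rewrite (nth_map i) ?size_enum_ord // nth_ord_enum tnth_mktuple => ->.
by [].
Qed.
End Types.
Local Open Scope ring_scope.
Section Sample.
Variables (RT : realType) (X J : finType) (Q : X -> RT) (s : nat).
Hypothesis Q0 : forall x, 0 <= Q x.

Definition ind (A : {set X}) (x : X) : RT := Q x * (x \in A)%:R.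

Lemma pow_sum (A : {set X}) :
  (\sum_(x in A) Q x) ^+ s = \sum_(f : {ffun 'I_s -> X}) \prod_(k < s) ind A (f k).
Proof.
have -> : \sum_(x in A) Q x = \sum_x ind A x.
  rewrite big_mkcond /=; apply: eq_bigr => x _; rewrite /ind.
  by case: (_ \in _); rewrite ?mulr1 ?mulr0.
rewrite -[in LHS](card_ord s) -prodr_const.
exact: (bigA_distr_bigA (fun (k : 'I_s) x => ind A x)).
Qed.
End Sample.

Section Sample2.
Variables (RT : realType) (X J : finType) (Q : X -> RT) (s : nat).
Hypothesis Q0 : forall x, 0 <= Q x.

Lemma ind_ge0 A x : 0 <= @ind RT X Q A x.
Proof. by rewrite /ind mulr_ge0 ?ler0n. Qed.

Lemma prod_ind_ge0 A (f : {ffun 'I_s -> X}) : 0 <= \prod_(k < s) @ind RT X Q A (f k).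
Proof. by apply: prodr_ge0 => k _; apply: ind_ge0. Qed.

Lemma sample (A : {set X}) (P : pred J) (B : J -> {set X}) :
  \sum_(j | P j) (\sum_(x in B j) Q x) ^+ s < (\sum_(x in A) Q x) ^+ s ->
  exists f : {ffun 'I_s -> X},
    (forall k, f k \in A) /\ (forall j, P j -> exists k, f k \notin B j).
Proof.
move=> H.
have [f Hf | Hn] := pickP (fun f : {ffun 'I_s -> X} =>
   [forall k, f k \in A] && [forall j, P j ==> [exists k, f k \notin B j]]).
  case/andP: Hf => /forallP H1 /forallP H2; exists f; split => // j Pj.
  by have /implyP/(_ Pj)/existsP := H2 j.
exfalso; move: H; apply/negP; rewrite -leNgt.
rewrite (@pow_sum RT X Q s A) (eq_bigr (fun j => \sum_(f : {ffun 'I_s -> X}) \prod_(k < s) @ind RT X Q (B j) (f k))); last first.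
  by move=> j _; rewrite (@pow_sum RT X Q s (B j)).
rewrite exchange_big /=; apply: ler_sum => f _.
case: (boolP [forall k, f k \in A]) => HA.
  have := Hn f; rewrite HA /= => /negbT; rewrite negb_forall => /existsP [j].
  rewrite negb_imply negb_exists => /andP [Pj /forallP Hj].
  rewrite (bigD1 j) //= -[X in X <= _]addr0 lerD //.
    rewrite le_eqVlt; apply/orP; left; apply/eqP/eq_bigr => k _; rewrite /ind.
    by move/forallP: HA => /(_ k) ->; have := Hj k; rewrite negbK => ->.
  by apply: sumr_ge0 => i _; apply: prod_ind_ge0.
rewrite negb_forall in HA; case/existsP: HA => k Hk.
rewrite (bigD1 k) //= {1}/ind (negbTE Hk) mulr0 mul0r.
by apply: sumr_ge0 => i _; apply: prod_ind_ge0.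
Qed.
End Sample2.
Section Count.
Variables (RT : realType) (X : finType).

Lemma sum_pow_card (x : RT) : \sum_(S : {set X}) x ^+ #|S| = (x + 1) ^+ #|X|.
Proof.
rewrite exprD1n (partition_big (fun S : {set X} => (inord #|S| : 'I_#|X|.+1)) predT) //=.
apply: eq_bigr => k _.
rewrite (eq_bigr (fun _ => x ^+ k)); last first.
  move=> S /eqP Hk; rewrite -Hk inordK // ltnS; exact: max_card.
rewrite sumr_const; congr (_ *+ _).
rewrite -card_draws; apply: eq_card => S; rewrite !inE.
have Hs : (#|S| < #|X|.+1)%N by rewrite ltnS max_card.
apply/eqP/eqP => [|Hk]; first by rewrite /= inordK.
by rewrite /= inordK.
Qed.

Lemma count_small (s : nat) (x : RT) : 0 < x -> x <= 1 ->
  (#|[set S : {set X} | (#|S| <= s)%N]|%:R : RT) <= (x + 1) ^+ #|X| / x ^+ s.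
Proof.
move=> x0 x1.
rewrite -sum_pow_card mulr_suml -sum1_card natr_sum.
rewrite [X in X <= _]big_mkcond /=; apply: ler_sum => S _.
rewrite inE; case: ifP => HS; last by rewrite divr_ge0 // exprn_ge0 // ltW.
rewrite ler_pdivlMr ?exprn_gt0 // mul1r.
by rewrite -(subnK HS) exprD ler_piMl ?exprn_ge0 ?exprn_ile1 // ltW.
Qed.
End Count.

Section Core.
Variables (RT : realType) (q n : nat) (C : IDcode RT q.+1 n).
Local Notation M := (idM C).
Local Notation Q := (@idQ _ _ _ C).
Local Notation D := (@idD _ _ _ C).

Definition Bs (j : 'I_M) : {set word q.+1 n} := [set x | 1/2 <= @acc RT q.+1 n (D j) x].

Lemma lam_not_le i : @lam_not _ _ _ C i <= lambda1 C.
Proof. by rewrite /lambda1; apply: le_bigmax. Qed.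

Lemma lam_to_le i j : j != i -> @lam_to _ _ _ C i j <= lambda2 C.
Proof.
move=> ji; rewrite /lambda2; apply: le_trans (le_bigmax _ _ i).
exact: (@le_bigmax_cond _ _ _ _ _ (fun j => j != i)).
Qed.

Lemma Q0 i x : 0 <= Q i x.
Proof. exact: (@idQ_ge0 _ _ _ C i x). Qed.

Lemma Q1 i : \sum_x Q i x = 1.
Proof. exact: (@idQ_sum1 _ _ _ C i). Qed.

Lemma Bout i j (d : RT) : j != i -> lambda2 C <= d / 2 ->
  \sum_(x in Bs j) Q i x <= d.
Proof.
move=> ji Hl.
apply: (@le_trans _ _ (2 * @lam_to _ _ _ C i j)); last first.
  by rewrite -ler_pdivlMl // [_ * d]mulrC; apply: le_trans (lam_to_le i j ji) Hl.
rewrite /lam_to mulr_sumr big_mkcond /=; apply: ler_sum => x _.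
rewrite /Bs inE; case: ifP => Hx; last by rewrite mulr_ge0 // mulr_ge0 ?Q0 // acc_ge0.
rewrite mulrCA -[X in X <= _]mulr1 ler_wpM2l ?Q0 //.
by rewrite -ler_pdivrMl // mulr1 -div1r.
Qed.

Lemma Bin i (d : RT) : lambda1 C <= d / 2 -> 1 - d <= \sum_(x in Bs i) Q i x.
Proof.
move=> Hl.
have E : \sum_(x in Bs i) Q i x = 1 - \sum_(x in ~: Bs i) Q i x.
  rewrite -(Q1 i) (bigID (mem (Bs i)) predT) /=.
  have -> : \sum_(x in ~: Bs i) Q i x = \sum_(x | ~~ (x \in Bs i)) Q i x.
    by apply: eq_bigl => x; rewrite inE.
  by rewrite addrK.
have H2 : \sum_(x in ~: Bs i) Q i x <= 2 * @lam_not _ _ _ C i.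
  rewrite /lam_not mulr_sumr big_mkcond /=; apply: ler_sum => x _.
  rewrite !inE; case: ifP => Hx; last by rewrite mulr_ge0 // mulr_ge0 ?Q0 // acc_ge0.
  rewrite mulrCA -[X in X <= _]mulr1 ler_wpM2l ?Q0 //.
  have := acc_compl RT q.+1 n (D i) x; rewrite /acc => Ec.
  move: Hx; rewrite /acc -ltNge => Hx.
  lra.
rewrite E lerB //; apply: le_trans H2 _.
by rewrite -ler_pdivlMl // [_ * d]mulrC; apply: le_trans (lam_not_le i) Hl.
Qed.

Lemma core (d : RT) (s M' : nat) (hM : (M' <= M)%N) :
  lambda1 C <= d / 2 -> lambda2 C <= d / 2 -> 0 <= d -> d <= 1 ->
  (M'.-1)%:R * d ^+ s < (1 - d) ^+ s ->
  (M' <= #|[set S : {set {ffun 'I_q -> 'I_n.+1}} | (#|S| <= s)%N]|)%N.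
Proof.
move=> H1 H2 d0 d1 Hs.
pose msg (j : 'I_M') : 'I_M := widen_ord hM j.
pose Pb (i : 'I_M') (f : {ffun 'I_s -> word q.+1 n}) :=
  [forall k, f k \in Bs (msg i)] && [forall j, (j != i) ==> [exists k, f k \notin Bs (msg j)]].
have hex : forall i, exists f, Pb i f.
  move=> i.
  have := @sample RT (word q.+1 n) 'I_M' (Q (msg i)) s (Q0 (msg i)) (Bs (msg i))
     (fun j => j != i) (fun j => Bs (msg j)).
  case.
    apply: (@le_lt_trans _ _ ((M'.-1)%:R * d ^+ s)); last first.
      apply: (lt_le_trans Hs); rewrite lerXn2r // ?nnegrE ?subr_ge0 //.
        by apply: sumr_ge0 => x _; apply: Q0.
      exact: (Bin (msg i) d H1).
    rewrite (@le_trans _ _ (\sum_(j | j != i) d ^+ s)) //.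
      apply: ler_sum => j ji; rewrite lerXn2r ?nnegrE //.
        by apply: sumr_ge0 => x _; apply: Q0.
      by apply: Bout.
    by rewrite sumr_const cardC1 card_ord mulr_natl.
  move=> f [Hf1 Hf2]; exists f; apply/andP; split; first by apply/forallP.
  apply/forallP => j; apply/implyP => ji; apply/existsP; exact: Hf2.
pose F i := xchoose (hex i).
pose G i := [set @tau q n (F i k) | k : 'I_s].
have GI : injective G.
  move=> i j Eij; apply/eqP; apply: contraT => ij.
  have /andP [_ /forallP /(_ j)] := xchooseP (hex i).
  rewrite eq_sym ij /= => /existsP [k Hk].
  have : @tau q n (F i k) \in G j by rewrite -Eij; apply: imset_f.
  case/imsetP => k' _ Ek.
  have [t Et] := @tau_perm q n _ _ (esym Ek).
  move: Hk; rewrite -/(F i) Et /Bs inE acc_perm.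
  have /andP [/forallP /(_ k') ] := xchooseP (hex j).
  by rewrite /Bs inE => ->.
have -> : M' = #|[set G i | i : 'I_M']| by rewrite card_imset // card_ord.
apply/subset_leq_card/fintype.subsetP => S /imsetP [i _ ->]; rewrite inE.
by apply: leq_trans (leq_imset_card _ _) _; rewrite card_ord.
Qed.
End Core.

Section Num.
Variable RT : realType.

Lemma e_le4 : expR (1 : RT) <= 4.
Proof.
have h : 1 + (- 2^-1) <= expR (- 2^-1 : RT) := expR_ge1Dx _.
have hp : 0 < expR (2^-1 : RT) := expR_gt0 _.
have E : expR (1 : RT) = expR (2^-1) * expR (2^-1).
  by rewrite -expRD; congr expR; field.
have E2 : expR (- 2^-1 : RT) * expR (2^-1) = 1 by rewrite -expRD addNr expR0.
rewrite E.
have : expR (2^-1 : RT) <= 2 by nra.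
nra.
Qed.

Lemma e_ge2 : 2 <= expR (1 : RT).
Proof. by have := expR_ge1Dx (1 : RT); rewrite (_ : 1 + 1 = 2). Qed.

Lemma final (q' n : nat) (C : IDcode RT q'.+1 n) (mu R : RT) :
  (0 < q')%N -> (0 < n)%N -> 0 < mu -> mu <= 1 -> 0 < R ->
  2 `^ (R * n%:R ^+ q') <= (idM C)%:R ->
  lambda1 C < n%:R `^ (-mu) -> lambda2 C < n%:R `^ (-mu) ->
  4 <= n%:R `^ (mu/2) -> (32 * 2 ^+ q' + 4) / (R * ln 2) <= n%:R `^ (mu/2) -> False.
Proof.
move=> q0 n0 mu0 mu1 R0 HM H1 H2 a4 aK.
set nr : RT := n%:R.
have n1 : 1 <= nr by rewrite ler1n.
set a := nr `^ (mu/2).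
rewrite -/nr -/a in a4 aK.
rewrite -/nr in HM H1 H2.
have Ea : nr `^ mu = a * a.
  rewrite /a -powRD; last by apply/implyP => _; rewrite pnatr_eq0 -lt0n.
  by congr (_ `^ _); field.
have Eeps : nr `^ (-mu) = (a*a)^-1 by rewrite powRN Ea.
have aaP : a * a <= nr by rewrite -Ea; apply: ler1_powR.
set P := nr ^+ q'.
have nP : nr <= P.
  rewrite /P -(prednK q0) exprS; apply: ler_peMr; [lra | exact: exprn_ege1].
set T := #|{ffun 'I_q' -> 'I_n.+1}|.
have TP : T%:R <= 2 ^+ q' * P.
  rewrite /T card_ffun !card_ord natrX -exprMn; apply: lerXn2r; rewrite ?nnegrE; [lra|lra|].
  by rewrite -addn1 natrD; lra.
have cpos : 0 < (2 : RT) ^+ q' by rewrite exprn_gt0.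
have HC : forall (s0 : nat) (x0 : RT), 0 < x0 -> x0 <= 1 ->
   (#|[set S : {set {ffun 'I_q' -> 'I_n.+1}} | (#|S| <= s0)%N]|%:R : RT) <= (x0 + 1) ^+ T / x0 ^+ s0.
  by move=> s0 x0 h0 h1; rewrite /T; apply: count_small.
clearbody T.
set d := 2 / (a * a).
have a0 : 0 < a by lra.
have daa : d * (a * a) = 2 by rewrite /d divfK // mulf_neq0 // gt_eqF.
have d0 : 0 < d by nra.
have a16 : 16 <= a * a by nra.
have d8 : d <= 1/8.
  have : d * 16 <= d * (a * a) by rewrite ler_pM2l.
  lra.
set r := d / (1 - d).
have rd : r * (1 - d) = d by rewrite /r divfK // gt_eqF //; lra.
have r0 : 0 < r by nra.
have dr : d <= r by nra.
have r2 : r <= 2 * d by nra.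
have e4 := e_le4.
have e2 := e_ge2.
set x := expR 1 * r.
have x0 : 0 < x by rewrite /x; nra.
have x1 : x <= 1 by rewrite /x; nra.
have T0 : 0 <= (T%:R : RT) by rewrite ler0n.
set s := (Num.truncn (x * T%:R)).+2.
have [sL sU] : x * T%:R + 1 <= s%:R /\ s%:R <= x * T%:R + 2.
  have /andP [h1 h2] := truncn_itv (mulr_ge0 (ltW x0) T0).
  rewrite /s -addn2 natrD; split; last by lra.
  rewrite -addn1 natrD in h2; lra.
have s1 : (1 <= s)%N by [].
clearbody s.
set Y := r^-1 ^+ s.
have ri : 4 <= r^-1.
  rewrite -[r^-1]mul1r ler_pdivlMr //; nra.
have r1 : 1 <= r^-1 by lra.
have Y2 : 2 <= Y.
  rewrite /Y -(prednK s1) exprS; have h := exprn_ege1 s.-1 r1.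
  apply: le_trans (_ : 2 <= r^-1 * 1) _; first by rewrite mulr1; apply: le_trans ri; lra.
  by apply: ler_wpM2l => //; apply: le_trans r1.
have Yd : Y = r^-1 ^+ s by [].
clearbody Y.
have Y0 : 0 <= Y by lra.
set M' := Num.truncn Y.
have M'Y : M'%:R <= Y by rewrite truncn_le.
have YM' : Y < M'.+1%:R := truncnS_gt Y.
have M1 : (1 <= M')%N by rewrite truncn_ge_nat //; lra.
clearbody M'.
have ra : r^-1 <= a * a.
  rewrite -[r^-1]mul1r ler_pdivrMr //.
  have : d * (a * a) <= r * (a * a) by rewrite ler_pM2r // mulr_gt0.
  by rewrite daa mulrC; lra.
have ea : expR (ln a) = a by apply/eqP; rewrite lnK_eq.
have la : ln a <= a := ltW (ln_sublinear a0).
have la0 : 0 <= ln a by apply: ln_ge0; lra.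
have Eaa : a * a = expR (2 * ln a) by rewrite (_ : 2 * ln a = ln a + ln a) ?expRD ?ea //; ring.
have Ylog : Y <= expR (s%:R * (2 * ln a)).
  rewrite Yd expRM_natl -Eaa; apply: lerXn2r; rewrite ?nnegrE //; last by rewrite mulr_ge0 // ltW.
  by apply: ltW; rewrite invr_gt0.
have l2 : 0 < ln (2 : RT) by apply: ln_gt0; lra.
have P0 : 0 <= P by lra.
have key : s%:R * (2 * ln a) <= R * P * ln 2.
  have K0 : 32 * 2 ^+ q' + 4 <= a * (R * ln 2).
    by rewrite -ler_pdivrMr // mulr_gt0.
  have h1 : s%:R * (2 * ln a) <= s%:R * (2 * a).
    by apply: ler_wpM2l; [rewrite ler0n | lra].
  have xr : x <= 4 * r by rewrite /x ler_wpM2r // ltW.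
  have hx : x * T%:R <= 8 * d * T%:R by apply: ler_wpM2r => //; lra.
  have hs : s%:R <= 8 * d * T%:R + 2 by lra.
  have h2 : s%:R * (a * a) <= 16 * T%:R + 2 * (a * a).
    have : s%:R * (a * a) <= (8 * d * T%:R + 2) * (a * a) by apply: ler_wpM2r; rewrite ?mulr_ge0 // ltW.
    have -> : (8 * d * T%:R + 2) * (a * a) = 8 * T%:R * (d * (a * a)) + 2 * (a * a) by ring.
    by rewrite daa; lra.
  have h3 : s%:R * (2 * a) * a <= (32 * 2 ^+ q' + 4) * P.
    have -> : s%:R * (2 * a) * a = 2 * (s%:R * (a * a)) by ring.
    have -> : (32 * 2 ^+ q' + 4) * P = 32 * (2 ^+ q' * P) + 4 * P by ring.
    lra.
  have h4 : (32 * 2 ^+ q' + 4) * P <= a * (R * ln 2) * P by apply: ler_wpM2r.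
  have h5 : s%:R * (2 * a) <= R * P * ln 2.
    rewrite -(ler_pM2r a0); apply: le_trans h3 _; apply: le_trans h4 _; lra.
  lra.
rewrite -/P in HM.
have P2 : 2 `^ (R * P) = expR (R * P * ln 2).
  by rewrite /powR ifF // pnatr_eq0.
have YM : Y <= (idM C)%:R.
  apply: le_trans Ylog _; apply: le_trans HM; rewrite P2 ler_expR; exact: key.
have hM' : (M' <= idM C)%N by rewrite -(ler_nat RT); apply: le_trans M'Y YM.
have Hd2 : d / 2 = nr `^ (-mu).
  by rewrite Eeps /d; field; rewrite gt_eqF.
have Hs : (M'.-1)%:R * d ^+ s < (1 - d) ^+ s.
  have -> : (1 - d) ^+ s = Y * d ^+ s.
    rewrite Yd -exprMn; congr (_ ^+ _).
    by rewrite -[X in _ = _ * X]rd mulrA mulVf ?mul1r // gt_eqF.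
  rewrite -subn1 natrB // ltr_pM2r ?exprn_gt0 //; lra.
have H1' : lambda1 C <= d / 2 by rewrite Hd2; apply: ltW.
have H2' : lambda2 C <= d / 2 by rewrite Hd2; apply: ltW.
have d1 : d <= 1 by lra.
have A1 : (x + 1) ^+ T <= expR (T%:R * x).
  rewrite expRM_natl; apply: lerXn2r; rewrite ?nnegrE; [lra | exact: ltW (expR_gt0 _) | ].
  by rewrite addrC; exact: expR_ge1Dx.
have A2 : 2 * expR (T%:R * x) <= expR s%:R.
  have : expR (1 + T%:R * x) <= expR s%:R by rewrite ler_expR; lra.
  rewrite expRD => h.
  have : 2 * expR (T%:R * x) <= expR 1 * expR (T%:R * x) by rewrite ler_wpM2r // ltW // expR_gt0.
  lra.
have Xs : x ^+ s = expR s%:R * r ^+ s by rewrite /x exprMn -expRM_natl mulr1.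
have Rs0 : 0 < r ^+ s by rewrite exprn_gt0.
have E0 : 0 < expR (s%:R : RT) := expR_gt0 _.
have B : (x + 1) ^+ T / x ^+ s <= Y / 2.
  rewrite Xs ler_pdivrMr ?mulr_gt0 //.
  have -> : Y / 2 * (expR s%:R * r ^+ s) = expR s%:R / 2.
    by rewrite Yd exprVn; field; rewrite gt_eqF.
  lra.
have hc := @core RT q' n C d s M' hM' H1' H2' (ltW d0) d1 Hs.
have hcs := HC s x x0 x1.
have : (M'%:R : RT) <= Y / 2.
  apply: le_trans B; apply: le_trans hcs; by rewrite ler_nat.
clear hc hcs HC; lra.
Qed.
End Num.


Theorem theorem1 (RT : realType) (q : nat) (mu R : RT) :
  (2 <= q)%N -> 0 < mu -> 0 < R ->
  ~ exists (n : nat -> nat) (C : forall i : nat, IDcode RT q (n i)),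
      (forall i, (0 < n i)%N) /\
      (forall N : nat, exists i0 : nat, forall i, (i0 <= i)%N -> (N <= n i)%N) /\
      (forall i, 2 `^ (R * (n i)%:R ^+ (q - 1)) <= (idM (C i))%:R) /\
      (forall i, lambda1 (C i) < (n i)%:R `^ (- mu)) /\
      (forall i, lambda2 (C i) < (n i)%:R `^ (- mu)).
Proof.
case: q => [|q'] // hq mu0 R0 [n [C [Hpos [Hlim [HM [H1 H2]]]]]].
have q0 : (0 < q')%N by [].
set mu1 := Num.min mu 1.
have mu10 : 0 < mu1 by rewrite /mu1 lt_min mu0 ltr01.
have mu11 : mu1 <= 1 by rewrite /mu1 ge_min lexx orbT.
have mum : mu1 <= mu by rewrite /mu1 ge_min lexx.
set K0 : RT := Num.max 4 ((32 * 2 ^+ q' + 4) / (R * ln 2)).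
have K04 : 4 <= K0 by rewrite /K0 le_max lexx.
have K0K : (32 * 2 ^+ q' + 4) / (R * ln 2) <= K0 by rewrite /K0 le_max lexx orbT.
have [i0 Hi0] := Hlim (Num.truncn (K0 `^ (2 / mu1))).+1.
have Hn := Hi0 i0 (leqnn _).
have n0 := Hpos i0.
set nr : RT := (n i0)%:R.
have n1 : 1 <= nr by rewrite ler1n.
have nK : K0 `^ (2 / mu1) <= nr.
  apply: ltW; apply: (lt_le_trans (truncnS_gt _)); by rewrite ler_nat.
have aK : K0 <= nr `^ (mu1 / 2).
  have h := @ge0_ler_powR RT (mu1 / 2) (ltW (divr_gt0 mu10 (ltr0Sn RT 1))).
  have := h (K0 `^ (2 / mu1)) nr; rewrite !nnegrE powR_ge0 => /(_ isT) .
  have -> : K0 `^ (2 / mu1) `^ (mu1 / 2) = K0.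
    by rewrite -powRrM (_ : 2 / mu1 * (mu1 / 2) = 1) ?powRr1 //; [lra | field; rewrite gt_eqF].
  move=> /(_ _ nK); apply; lra.
have powle : nr `^ (- mu) <= nr `^ (- mu1) by apply: ler_powR => //; lra.
apply: (@final RT q' (n i0) (C i0) mu1 R q0 n0 mu10 mu11 R0).
- by have := HM i0; rewrite subn1.
- exact: lt_le_trans (H1 i0) powle.
- exact: lt_le_trans (H2 i0) powle.
- lra.
- lra.
Qed.
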